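(* Fix integers $s,t\ge2$ and let $W=\{w_1<w_2<\cdots<w_k\}$ be a subset of $\{s+1,s+2,\ldots,st\}$. Let $\Omega_{s,t}(W)$ be the collection of all sets of integers $I=\{i_1<i_2<\cdots<i_k\}$ satisfying $w_\ell-s+\ell\leq i_\ell\leq w_\ell-1$ for all $\ell\in[k]$. Then \[\vert \Omega_{s,t}(W)\vert\geq \frac{s-k}{s}\binom{s+k-1}{k}.\] *)

(* Defs.v *)
From mathcomp Require Import all_boot all_order all_algebra.
Set Implicit Arguments. Unset Strict Implicit. Unset Printing Implicit Defensive.

(* W = {w_1 < ... < w_k} is encoded as the strictly increasing sequence W
   (sorted ltn), with w_(l+1) = nth 0 W l for l < k = size W (0-based index). *)
Definition W_ok (s t : nat) (W : seq nat) : bool :=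
  sorted ltn W && all (fun w => (s.+1 <= w) && (w <= s * t)) W.

(* Since w_l >= s+1, all such i_l are positive integers < s*t,
   so they live in 'I_(s*t).  With 0-based index j (l = j+1):
     w_j - s + (j+1) <= i_j   <->  w_j + j.+1 <= i_j + s   (no truncation)
     i_j <= w_j - 1           <->  i_j < w_j. *)
Definition Omega (s t : nat) (W : seq nat) : {set (size W).-tuple 'I_(s * t)} :=
  [set I : (size W).-tuple 'I_(s * t) |
     sorted ltn (map val I) &&
     [forall j : 'I_(size W),
        (nth 0 W j + j.+1 <= val (tnth I j) + s) && (val (tnth I j) < nth 0 W j)]].

(* Main.v *)
Require Import Defs.
From mathcomp Require Import all_boot all_order all_algebra zify.
Import Order.TTheory GRing.Theory Num.Theory.

Fixpoint D (k n : nat) : seq (seq nat) :=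
  match k with
  | 0 => [:: [::]]
  | k'.+1 => [seq (n.+2 - u) :: map (addn (n.+1 - u)) c | u <- iota 2 n, c <- D k' u]
  end.

Definition Pd (d : seq nat) (k n : nat) : Prop :=
  size d = k /\ (forall j, j < k -> 0 < nth 0 d j <= n + j) /\
  (forall j, j.+1 < k -> nth 0 d j <= nth 0 d j.+1).

Lemma D_prop k : forall n d, d \in D k n -> Pd d k n.
Proof.
elim: k => [|k IH] n d /=.
  by rewrite inE => /eqP->; split=> //; split=> j.
case/allpairsPdep => u [c [Hu Hc ->]].
have [Hs [Hb Hi]] := IH _ _ Hc.
move: Hu; rewrite mem_iota => /andP[Hu1 Hu2].
split; first by rewrite /= size_map Hs.
split.
  case=> [|j] /= Hj; first lia.
  rewrite (nth_map 0); last by rewrite Hs.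
  have := Hb j Hj; lia.
case=> [|j] /= Hj.
  rewrite (nth_map 0); last by rewrite Hs; lia.
  have := Hb 0 ltac:(lia); lia.
rewrite !(nth_map 0); try (rewrite Hs; lia).
have := Hi j Hj; lia.
Qed.

Lemma D_uniq k : forall n, uniq (D k n).
Proof.
elim: k => [|k IH] n //=.
apply: allpairs_uniq_dep => [|u _|]; first exact: iota_uniq.
  exact: IH.
move=> [u1 c1] [u2 c2] /allpairsPdep[x1 [y1 [H1 _ E1]]] /allpairsPdep[x2 [y2 [H2 _ E2]]] /=.
move: E1 E2 => [-> ->] [-> ->].
move: H1 H2; rewrite !mem_iota => H1 H2 [Eh Et].
have Ex : x1 = x2 by lia.
subst x2.
by move/inj_map: Et => ->; [|exact: addnI].
Qed.

Lemma D_size0 k : size (D k.+1 0) = 0.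
Proof. by []. Qed.

Lemma D_sizeE k n : size (D k.+1 n) = sumn [seq size (D k u) | u <- iota 2 n].
Proof. exact: size_allpairs_dep. Qed.

Lemma D_sizeS k n : size (D k.+1 n.+1) = size (D k.+1 n) + size (D k n.+2).
Proof.
rewrite !D_sizeE.
have -> : iota 2 n.+1 = iota 2 n ++ [:: n.+2] by rewrite -(addn1 n) iotaD add2n addn1.
by rewrite map_cat sumn_cat /= addn0.
Qed.

Lemma D_size1 n : size (D 1 n) = n.
Proof. by elim: n => [|n IHn] //; rewrite D_sizeS IHn addn1. Qed.

Lemma D_bin k n : size (D k.+1 n) + 'C(n + k + k.+1, k) = 'C(n + k + k.+1, k.+1).
Proof.
elim: k n => [|k IH] n.
  by rewrite D_size1 bin0 !addn0 addn1 bin1.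
elim: n => [|n IHn].
  rewrite D_size0 add0n add0n.
  rewrite -[RHS]bin_sub; last by lia.
  by congr binomial; lia.
rewrite D_sizeS.
have := IH n.+2.
set N := n + k.+1 + k.+2.
have -> : n.+2 + k + k.+1 = N by rewrite /N; lia.
have -> : n.+1 + k.+1 + k.+2 = N.+1 by rewrite /N; lia.
move: IHn; rewrite -/N !binS.
lia.
Qed.

Lemma D_closed k n : (n + k) * size (D k n) = n * 'C(n + k + k - 1, k).
Proof.
case: k => [|k]; first by rewrite /= bin0 !muln1 addn0.
have := D_bin k n; have := mul_bin_left (n + k + k.+1) k.
have -> : n + k.+1 + k.+1 - 1 = n + k + k.+1 by lia.
have -> : n + k + k.+1 - k = n + k.+1 by lia.
set c0 := 'C(_, k); set c1 := 'C(_, k.+1); set h := size _.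
move=> E1 E2. nia.
Qed.
Local Open Scope ring_scope.
Lemma fval N (x0 : 'I_N) (W d : seq nat) k (i : 'I_k) :
  (nth 0 W i - nth 0 d (k - i.+1) < N)%N ->
  val (tnth [tuple insubd x0 (nth 0 W j - nth 0 d (k - j.+1))%N | j < k] i)
    = (nth 0 W i - nth 0 d (k - i.+1))%N.
Proof. by move=> H; rewrite tnth_mktuple val_insubd H. Qed.

Theorem lemma3 (s t : nat) (W : seq nat) :
  (2 <= s)%N -> (2 <= t)%N -> W_ok s t W ->
  ((s%:Z - (size W)%:Z)%:~R / s%:R) * ('C(s + size W - 1, size W))%:R
    <= (#|Omega s t W|)%:R :> rat.
Proof.
move=> s2 t2 /andP[Wsort Wall].
have Ws i : (i.+1 < size W)%N -> (nth 0 W i < nth 0 W i.+1)%N.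
  by move=> Hi; move/(sortedP 0): Wsort; apply.
have Wb i : (i < size W)%N -> (s.+1 <= nth 0 W i <= s * t)%N.
  by move=> Hi; move/(all_nthP 0): Wall; apply.
have [Hks|Hks] := leqP s (size W).
  apply: le_trans (_ : _ <= 0) _; last exact: ler0n.
  apply: mulr_le0_ge0; last exact: ler0n.
  apply: mulr_le0_ge0; last by rewrite invr_ge0 ler0n.
  by rewrite lerz0 subr_le0 lez_nat.
set k := size W in Hks Ws Wb *.
set n := (s - k)%N.
have Hs : s = (n + k)%N by rewrite /n; lia.
have stpos : (0 < s * t)%N by rewrite muln_gt0; lia.
pose x0 : 'I_(s * t) := Ordinal stpos.
pose f (d : seq nat) : k.-tuple 'I_(s * t) :=
  [tuple insubd x0 (nth 0 W j - nth 0 d (k - j.+1))%N | j < k].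
have fv d (i : 'I_k) : d \in D k n ->
    val (tnth (f d) i) = (nth 0 W i - nth 0 d (k - i.+1))%N.
  move=> /D_prop [Hsz [Hb Hi]]; rewrite fval //.
  have := ltn_ord i; have := Wb i (ltn_ord i); set N := (s * t)%N.
  have := Hb (k - i.+1)%N ltac:(have := ltn_ord i; lia); lia.
have Hc : (size (D k n) <= #|Omega s t W|)%N.
  rewrite -(size_map f) cardE; apply: uniq_leq_size.
    rewrite map_inj_in_uniq ?D_uniq // => d1 d2 H1 H2 E.
    have [S1 [B1 _]] := D_prop _ _ _ H1; have [S2 [B2 _]] := D_prop _ _ _ H2.
    apply: (@eq_from_nth _ 0%N); first by rewrite S1 S2.
    move=> i; rewrite S1 => Hi.
    have Hj : (k - i.+1 < k)%N by lia.
    have := congr1 (fun I => val (tnth I (Ordinal Hj))) E.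
    rewrite /= !fv //=.
    have -> : (k - (k - i.+1).+1)%N = i by lia.
    have := Wb _ Hj; have := B1 i Hi; have := B2 i Hi; set N := (s * t)%N; lia.
  move=> _ /mapP[d Hd ->]; rewrite mem_enum inE; apply/andP; split.
    apply/(sortedP 0) => i; rewrite size_map size_tuple => Hi.
    have Hi0 : (i < k)%N by lia.
    rewrite !(nth_map x0) ?size_tuple //.
    rewrite -(tnth_nth x0 (f d) (Ordinal Hi0)) -(tnth_nth x0 (f d) (Ordinal Hi)).
    rewrite (fv d (Ordinal Hi0)) // (fv d (Ordinal Hi)) //=.
    have [S1 [B1 I1]] := D_prop _ _ _ Hd.
    have := Ws i Hi; have := Wb i Hi0; have := B1 (k - i.+1)%N ltac:(lia).
    have := B1 (k - i.+2)%N ltac:(lia); have := I1 (k - i.+2)%N ltac:(lia).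
    have -> : (k - i.+2).+1 = (k - i.+1)%N by lia.
    lia.
  apply/forallP => j; rewrite fv //.
  have [S1 [B1 I1]] := D_prop _ _ _ Hd.
  have := Wb j (ltn_ord j); have := B1 (k - j.+1)%N ltac:(have := ltn_ord j; lia).
  set N := (s * t)%N; have jk : (j < k)%N := ltn_ord j; have E : @nat_of_ord k j = @nat_of_ord (size W) j by []; move=> *; rewrite E; apply/andP; split; lia.
have Hcl := D_closed k n.
rewrite subzn; last by lia.
rewrite pmulrn mulrAC ler_pdivrMr ?ltr0n; last by lia.
rewrite -!natrM ler_nat.
rewrite -Hs in Hcl.
rewrite -Hcl mulnC; apply: leq_mul => //.
Qed.
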